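(* Let $\varphi_{-2,1}(\tau,z)=\vartheta_1(\tau,z)^2/\eta(\tau)^6$, and write its Fourier expansion as $\varphi_{-2,1}(\tau,z)=\sum_{n,r\in\mathbb{Z}} C_{-2}(4n-r^2)\,q^n\zeta^r$ (the coefficient depends only on $4n-r^2$). Then for every integer $\Delta\ge -1$ with $\Delta\equiv 0$ or $3 \pmod 4$ one has $(-1)^{\Delta+1}C_{-2}(\Delta)>0$.
   Context: $\tau$ is in the upper half-plane, $z\in\mathbb{C}$, $q=e^{2\pi i\tau}$, $\zeta=e^{2\pi i z}$. $\vartheta_1(\tau,z)=\sum_{n\in\mathbb{Z}}(-1)^n q^{\frac12(n-\frac12)^2}\zeta^{n-\frac12}$ and $\eta(\tau)=q^{1/24}\prod_{n\ge1}(1-q^n)$. The function $\varphi_{-2,1}$ is a weak Jacobi form of weight $-2$ and index $1$, so its coefficient of $q^n\zeta^r$ depends only on the discriminant $\Delta=4n-r^2$, which is $\equiv 0,3 \pmod 4$ and $\ge -1$ for nonzero coefficients. *)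

(* Defs.v *)
(* Formal Fourier expansions in the variables
   Q = q^(1/24) (exponent a : nat) and Z = zeta^(1/2) (exponent b : int),
   so that theta_1, eta and theta_1^2/eta^6 all have integral exponents. *)
From mathcomp Require Import all_boot all_order all_algebra.
Set Implicit Arguments. Unset Strict Implicit. Unset Printing Implicit Defensive.
Import Order.TTheory GRing.Theory Num.Theory.
Local Open Scope ring_scope.

(* Coefficient of Q^a Z^b in theta_1(tau,z) = sum_n (-1)^n q^((n-1/2)^2/2) zeta^(n-1/2).
   With b = 2n-1 (odd) the q-exponent is b^2/8, i.e. Q-exponent 3 b^2, and
   the sign is (-1)^n with n = (b+1)/2. *)
Definition theta1_coef (a : nat) (b : int) : int :=
  if odd `|b|%N && (a == 3 * `|b| ^ 2)%N
  then (-1) ^+ `|((b + 1) %/ 2)%Z|%N else 0.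

(* Coefficient of Q^a Z^b in theta_1^2 (Cauchy product; only |b1| <= a can
   contribute since theta1_coef a1 b1 = 0 unless a1 = 3 b1^2). *)
Definition theta1_sq_coef (a : nat) (b : int) : int :=
  \sum_(a1 < a.+1) \sum_(i < (2 * a).+1)
     theta1_coef a1 (i%:Z - a%:Z) * theta1_coef (a - a1)%N (b - (i%:Z - a%:Z)).

(* Coefficient of Q^j in eta^6 = (Q * prod_(k>=1) (1 - Q^(24k)))^6; the factors
   with k > j do not affect the coefficient of Q^j. *)
Definition eta6_coef (j : nat) : int :=
  (('X * \prod_(1 <= k < j.+1) (1 - 'X^(24 * k))) ^+ 6 : {poly int})`_j.

(* Main.v *)
Require Import Defs.
From mathcomp Require Import all_boot all_order all_algebra zify ring.
Import Order.TTheory GRing.Theory Num.Theory.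
Local Open Scope ring_scope.

Definition agree (m : nat) (p q : {poly int}) := forall i, (i < m)%N -> p`_i = q`_i.

Lemma agree_refl m p : agree m p p. Proof. by []. Qed.
Lemma agree_sym m p q : agree m p q -> agree m q p.
Proof. by move=> h i hi; rewrite h. Qed.
Lemma agree_trans m p q u : agree m p q -> agree m q u -> agree m p u.
Proof. by move=> h1 h2 i hi; rewrite h1 ?h2. Qed.

Lemma agreeM m p p' q q' : agree m p p' -> agree m q q' -> agree m (p*q) (p'*q').
Proof.
move=> hp hq i hi; rewrite !coefM; apply: eq_bigr => j _.
have := ltn_ord j => hj.
rewrite hp ?hq //; lia.
Qed.

Lemma agreeX m p q k : agree m p q -> agree m (p^+k) (q^+k).
Proof.
move=> h; elim: k => [|k IH]; first by rewrite !expr0.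
by rewrite !exprS; apply: agreeM.
Qed.

Lemma agree_prod m a b (F : nat -> {poly int}) :
  (forall k, (a <= k < b)%N -> agree m (F k) 1) ->
  agree m (\prod_(a <= k < b) F k) 1.
Proof.
move=> h; rewrite big_seq; apply: (big_ind (fun p => agree m p 1)).
- exact: agree_refl.
- by move=> x y hx hy; rewrite -(mulr1 1); apply: agreeM.
- by move=> i; rewrite mem_index_iota; apply: h.
Qed.

Lemma agree_1X m d : (m <= d)%N -> agree m (1 - 'X^d) 1.
Proof.
move=> hd i hi; rewrite coefB coefXn.
have -> : (i == d) = false by apply/eqP; lia.
by rewrite subr0.
Qed.

Definition P (K : nat) : {poly int} := \prod_(1 <= k < K) (1 - 'X^(24 * k)).

Lemma P_agree j K : (j < K)%N -> agree j.+1 (P K) (P j.+1).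
Proof.
move=> hjK; rewrite /P (big_cat_nat _ (n := j.+1)) //=; idtac.
rewrite -[X in agree _ _ X]mulr1; apply: agreeM; first exact: agree_refl.
apply: agree_prod => k hk; apply: agree_1X; lia.
Qed.

Lemma eta6E j K : (j < K)%N ->
  eta6_coef j = if (6 <= j)%N then ((P K)^+6)`_(j-6) else 0.
Proof.
move=> hjK; rewrite /eta6_coef -/(P j.+1) exprMn coefXnM.
case: ifP => h; first by case: (leqP 6 j) h.
have -> : (6 <= j)%N by lia.
symmetry; apply: (agreeX _ _ _ 6 (P_agree _ _ hjK)); lia.
Qed.

Lemma sum_ge_term n (F : 'I_n -> int) i0 :
  (forall i, 0 <= F i) -> F i0 <= \sum_i F i.
Proof.
move=> h; rewrite (bigD1 i0) //=.
by rewrite lerDl; apply: sumr_ge0.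
Qed.

Definition good (p : {poly int}) := (forall i, 0 <= p`_i) /\ p`_0 = 1.

Lemma good_mul p q : good p -> good q -> good (p * q).
Proof.
move=> [hp0 hp1] [hq0 hq1]; split; last by rewrite coef0M hp1 hq1 mulr1.
by move=> i; rewrite coefM; apply: sumr_ge0 => j _; apply: mulr_ge0.
Qed.

Lemma good1 : good 1.
Proof. by split=> [i|]; rewrite coef1 //; case: (i == 0)%N. Qed.

Lemma goodX p k : good p -> good (p ^+ k).
Proof.
move=> h; elim: k => [|k IH]; first by rewrite expr0; exact: good1.
by rewrite exprS; apply: good_mul.
Qed.

Lemma good_ge p q m : good p -> good q -> p`_m <= (p*q)`_m.
Proof.
move=> [hp0 hp1] [hq0 hq1]; rewrite coefM.
have := sum_ge_term _ (fun j : 'I_m.+1 => p`_j * q`_(m - j)) ord_max.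
rewrite /= subnn hq1 mulr1; apply => i; exact: mulr_ge0.
Qed.

Definition Sg (K k : nat) : {poly int} := \sum_(i < K) 'X^(24*k) ^+ i.
Definition Dp (K : nat) : {poly int} := (\prod_(1 <= k < K) Sg K k) ^+ 6.

Lemma coefSg K k j : (Sg K k)`_j = \sum_(i < K) (j == 24 * k * i)%:R.
Proof. by rewrite /Sg coef_sum; apply: eq_bigr => i _; rewrite -exprM coefXn. Qed.

Lemma goodSg K k : (0 < K)%N -> (0 < k)%N -> good (Sg K k).
Proof.
move=> hK hk; split=> [i|]; rewrite coefSg.
  by apply: sumr_ge0 => j _; case: (_ == _).
case: K hK => // K _; rewrite big_ord_recl /= big1 ?addr0; first by rewrite [X in nat_of_bool X](_ : _ = true) //; apply/eqP; rewrite /=; lia.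
move=> i _; have -> : (0 == 24 * k * (bump 0 i))%N = false by apply/eqP; rewrite /bump /=; lia.
by [].
Qed.

Lemma goodDp K : (0 < K)%N -> good (Dp K).
Proof.
move=> hK; apply: goodX; rewrite big_seq; apply: (big_ind good good1 good_mul).
by move=> i; rewrite mem_index_iota => /andP [h1 h2]; apply: goodSg.
Qed.

Lemma Dp_pos K k : (1 < K)%N -> (k < K)%N -> 1 <= (Dp K)`_(24 * k).
Proof.
move=> hK hk.
have hP : good (\prod_(2 <= i < K) Sg K i).
  rewrite big_seq; apply: (big_ind good good1 good_mul).
  by move=> i; rewrite mem_index_iota => /andP [h1 h2]; apply: goodSg; lia.
have hS : good (Sg K 1) by apply: goodSg; lia.
have hPP : good (\prod_(1 <= i < K) Sg K i).
  by rewrite big_ltn //; apply: good_mul.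
rewrite /Dp exprS.
apply: (le_trans _ (good_ge _ _ _ hPP (goodX _ 5 hPP))).
rewrite big_ltn //.
apply: (le_trans _ (good_ge _ _ _ hS hP)).
rewrite coefSg.
have := sum_ge_term _ (fun i : 'I_K => ((24 * k)%N == (24 * 1 * i)%N)%:R : int) (Ordinal hk).
rewrite /= muln1 eqxx; apply => i; by case: (_ == _).
Qed.

Lemma SgE K k : Sg K k * (1 - 'X^(24 * k)) = 1 - 'X^(24 * k * K).
Proof.
by rewrite /Sg mulrC -opprB mulNr -subrX1 opprB -exprM.
Qed.

Lemma DE_agree K m : (m <= 24*K)%N -> agree m (Dp K * (P K)^+6) 1.
Proof.
move=> hm; rewrite /Dp /P -exprMn -big_split /=.
rewrite -[X in agree _ _ X](expr1n _ 6); apply: agreeX; apply: agree_prod => k hk.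
rewrite SgE; apply: agree_1X; nia.
Qed.

Lemma phi_formula (phi : nat -> int -> int)
  (hphi : forall (a : nat) (b : int),
     \sum_(j < a.+1) phi (a - j)%N b * eta6_coef j = theta1_sq_coef a b) M b :
  phi M b = \sum_(i < M.+1) theta1_sq_coef (i+6) b * (Dp (M+7))`_(M - i).
Proof.
set K := (M+7)%N.
pose F : {poly int} := \poly_(i < M.+1) (phi i b).
pose Tt : {poly int} := \poly_(i < M.+1) theta1_sq_coef (i+6) b.
pose Ep := P K ^+ 6.
have h1 : agree M.+1 (F * Ep) Tt.
  move=> a ha; rewrite coefMr coef_poly ha -hphi.
  have -> : (a+6).+1 = (6 + a.+1)%N by lia.
  rewrite big_split_ord /=.
  have -> : \sum_(i < 6) phi (a + 6 - i)%N b * eta6_coef i = 0.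
    apply: big1 => i _; rewrite (eta6E _ K); last by (have := ltn_ord i; lia).
    rewrite (_ : (6 <= i)%N = false) ?mulr0 //; have := ltn_ord i; lia.
  rewrite add0r.
  apply: eq_bigr => j _; have := ltn_ord j => hj.
  rewrite coef_poly (_ : (a - j < M.+1)%N); last by lia.
  rewrite (eta6E _ K); last by lia.
  rewrite (_ : (6 <= 6 + j)%N) ?addKn; last by lia.
  by rewrite (_ : (a + 6 - (6 + j) = a - j)%N) //; lia.
have h2 : agree M.+1 (Ep * Dp K) 1 by rewrite mulrC; apply: DE_agree; lia.
have e1 : F`_M = (F * (Ep * Dp K))`_M.
  by have := agreeM _ _ _ _ _ (agree_refl M.+1 F) (agree_sym _ _ _ h2) M (ltnSn M); rewrite mulr1.
have e2 : (F * (Ep * Dp K))`_M = (Tt * Dp K)`_M.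
  by rewrite mulrA; apply: (agreeM _ _ _ _ _ h1 (agree_refl _ (Dp K))).
move: e1; rewrite e2 coef_poly ltnSn => ->; rewrite coefM.
by apply: eq_bigr => i _; rewrite coef_poly ltn_ord.
Qed.

Lemma sqpar (r : int) : ((r^+2 - r) %% 2 = 0)%Z.
Proof.
have := divz_eq r 2; have := ltz_pmod r (isT : (0 < 2 :> int)); have := modz_ge0 r (isT : (2 != 0 :> int)).
set q := (r %/ 2)%Z; set m := (r %% 2)%Z => h1 h2 h3.
have : m = 0 \/ m = 1 by lia.
move: h3; clearbody q m => h3 hm; rewrite h3.
case: hm => ->.
  by rewrite (_ : _ - _ = (2 * q^+2 - q) * 2) ?modzMl //; ring.
by rewrite (_ : _ - _ = (2 * q^+2 + q) * 2) ?modzMl //; ring.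
Qed.

Lemma oddE (x : int) : odd `|x|%N = ((x %% 2)%Z == 1).
Proof. apply/idP/eqP; lia. Qed.

Lemma xor_lem (n:nat) (r b1 : int) : odd `|b1| -> odd `|(2*r-b1)%R| ->
 odd `|(4 * n%:Z - r ^+ 2 + 1)%R|%N (+) (odd `|((b1 + 1) %/ 2)%Z|%N (+) odd `|((2 * r - b1 + 1) %/ 2)%Z|%N) = false.
Proof.
move=> o1 o2; have hr := sqpar r.
have hu : ((b1 + 1) %/ 2)%Z * 2 = b1 + 1 by lia.
have hv : ((2 * r - b1 + 1) %/ 2)%Z * 2 = 2 * r - b1 + 1 by lia.
rewrite !oddE.
move: hu hv hr; set u := ((b1 + 1) %/ 2)%Z; set v := ((2 * r - b1 + 1) %/ 2)%Z; set R2 := r^+2.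
clearbody u v R2 => hu hv hr.
have huv : u + v = r + 1 by lia.
have hw : (4 * n%:Z - R2 + 1) = (4 * n%:Z - (R2 - r)) - r + 1 by ring.
rewrite hw; move: hr; set t := R2 - r; clearbody t => ht.
clear hw hu hv o1 o2.
case: eqP => h1; case: eqP => h2; case: eqP => h3 //=; exfalso; lia.
Qed.

Lemma term_eq (n : nat) (r : int) a1 a2 b1 :
  (-1)^+`|(4 * n%:Z - r ^+ 2 + 1)%R|%N * (theta1_coef a1 b1 * theta1_coef a2 (2*r - b1))
  = ((odd `|b1|%N && (a1 == 3 * `|b1| ^ 2)%N) && (odd `|(2*r - b1)%R|%N && (a2 == 3 * `|(2*r-b1)%R| ^ 2)%N))%:R.
Proof.
rewrite /theta1_coef; case: ifP => H1; last by rewrite mul0r mulr0.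
case: ifP => H2; last by rewrite !mulr0.
rewrite /= mulr1n; move/andP: H1 => [o1 _]; move/andP: H2 => [o2 _].
have sE : forall k, (-1 : int)^+ k = (-1)^+ (odd k) by move=> k; rewrite signr_odd.
rewrite (sE `|(4 * n%:Z - r ^+ 2 + 1)%R|%N) (sE `|((b1 + 1) %/ 2)%Z|%N) (sE `|((2 * r - b1 + 1) %/ 2)%Z|%N).
by rewrite -!signr_addb xor_lem.
Qed.

Lemma abssq (x:int) : ((`|x|^2)%N : int) = x^+2.
Proof. nia. Qed.
Lemma sq_mod4 (m : nat) : (m^2 %% 4 = if odd m then 1 else 0)%N.
Proof. case: (boolP (odd m)) => h; nia. Qed.

Lemma sq_nonneg (n : nat) (r : int) c :
  0 <= (-1)^+`|(4 * n%:Z - r ^+ 2 + 1)%R|%N * theta1_sq_coef c (2*r).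
Proof.
rewrite /theta1_sq_coef mulr_sumr; apply: sumr_ge0 => a1 _.
rewrite mulr_sumr; apply: sumr_ge0 => i _.
by rewrite term_eq; case: (_ && _).
Qed.

Lemma sq_ge (n : nat) (r : int) c a1 i : (a1 <= c)%N -> (i <= 2*c)%N ->
  (-1)^+`|(4 * n%:Z - r ^+ 2 + 1)%R|%N *
     (theta1_coef a1 (i%:Z - c%:Z) * theta1_coef (c - a1)%N (2*r - (i%:Z - c%:Z)))
  <= (-1)^+`|(4 * n%:Z - r ^+ 2 + 1)%R|%N * theta1_sq_coef c (2*r).
Proof.
move=> ha hi; rewrite -ltnS in ha; rewrite -ltnS in hi.
rewrite /theta1_sq_coef mulr_sumr.
apply: (le_trans _ (sum_ge_term _ _ (Ordinal ha) _)); last first.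
  move=> a; rewrite mulr_sumr; apply: sumr_ge0 => j _.
  by rewrite term_eq; case: (_ && _).
rewrite /= mulr_sumr.
apply: (le_trans _ (sum_ge_term _ _ (Ordinal hi) _)) => //.
by move=> j; rewrite term_eq; case: (_ && _).
Qed.

Lemma witness (n : nat) (r : int) : -1 <= 4 * n%:Z - r ^+ 2 ->
  exists i0 k : nat, [/\ (i0 < (24*n).+1)%N, (24*n - i0 = 24*k)%N, (k < 24*n + 7)%N &
     1 <= (-1)^+`|(4 * n%:Z - r ^+ 2 + 1)%R|%N * theta1_sq_coef (i0+6) (2*r)].
Proof.
move=> hD.
have hX := abssq r; have hXm := sq_mod4 `|r|.
set X := (`|r|^2)%N in hX hXm.
case: (boolP (odd `|r|)) => ho; rewrite ?ho in hXm.
- exists (6*X - 6)%N, ((4*n + 1 - X) %/ 4)%N.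
  have hX1 : (1 <= X)%N by lia.
  have hXn : (X <= 4 * n + 1)%N by lia.
  split; [lia | lia | lia |].
  rewrite (_ : (6*X - 6 + 6 = 6*X)%N); last by lia.
  have hi : (`|(r + (6*X)%N%:Z)%R| <= 2 * (6*X))%N by lia.
  apply: (le_trans _ (sq_ge n r (6*X) (3*X) _ _ hi)); last by lia.
  have e1 : (`|(r + (6*X)%N%:Z)%R|%:Z - (6*X)%N%:Z) = r by lia.
  rewrite e1 term_eq (_ : 2 * r - r = r); last by ring.
  rewrite (_ : (6*X - 3*X = 3*X)%N); last by lia.
  by rewrite ho eqxx.
- rewrite (negbTE ho) in hXm.
  exists (6*X)%N, ((4*n - X) %/ 4)%N.
  have hXn : (X <= 4 * n)%N by lia.
  split; [lia | lia | lia |].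
  have hY := abssq (r+1); have hZ := abssq (r-1).
  set Y := (`|(r + 1)%R|^2)%N in hY *. set Z := (`|(r - 1)%R|^2)%N in hZ *.
  have hYZ : (Y + Z = 2 * X + 2)%N.
    have : (Y%:Z + Z%:Z = 2 * X%:Z + 2) by rewrite hY hZ hX; ring.
    lia.
  have eY : Y = (`|(r + 1)%R| ^ 2)%N by [].
  have eZ : Z = (`|(r - 1)%R| ^ 2)%N by [].
  clearbody X Y Z.
  have hi : (`|(r + 1 + (6*X+6)%N%:Z)%R| <= 2 * (6*X+6))%N by lia.
  have hY3 : (3 * Y <= 6*X + 6)%N by lia.
  apply: (le_trans _ (sq_ge n r (6*X + 6) (3*Y) _ hY3 hi)).
  have e1 : (`|(r + 1 + (6*X+6)%N%:Z)%R|%:Z - (6*X+6)%N%:Z) = r + 1 by lia.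
  rewrite e1 term_eq (_ : 2 * r - (r + 1) = r - 1); last by ring.
  rewrite (_ : (6*X + 6 - 3*Y = 3*Z)%N); last by lia.
  rewrite -eY -eZ !eqxx.
  have -> : odd `|(r + 1)%R| by lia.
  have -> : odd `|(r - 1)%R| by lia.
  by [].
Qed.

Theorem mainTheorem1 (phi : nat -> int -> int)
  (hphi : forall (a : nat) (b : int),
     \sum_(j < a.+1) phi (a - j)%N b * eta6_coef j = theta1_sq_coef a b) :
  forall (n : nat) (r : int), -1 <= 4 * n%:Z - r ^+ 2 ->
    0 < (-1) ^+ `|(4 * n%:Z - r ^+ 2 + 1)%R|%N * phi (24 * n)%N (2 * r).
Proof.
move=> n r hD.
have [i0 [k [hi0 hk hkK hpos]]] := witness n r hD.
rewrite (phi_formula phi hphi) mulr_sumr (bigD1 (Ordinal hi0)) //= hk.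
have hD1 := Dp_pos ((24*n)+7) k (ltac:(lia) : (1 < 24*n+7)%N) hkK.
have hrest : 0 <= \sum_(i < (24 * n).+1 | i != Ordinal hi0)
    (-1) ^+ `|(4 * n%:Z - r ^+ 2 + 1)%R|%N *
    (theta1_sq_coef (i + 6) (2 * r) * (Dp (24 * n + 7))`_(24 * n - i)).
  apply: sumr_ge0 => i _; rewrite mulrA; apply: mulr_ge0; first exact: sq_nonneg.
  by case: (goodDp (24*n+7) (ltac:(lia) : (0 < 24*n+7)%N)).
move: hrest; rewrite mulrA.
set A := _ * theta1_sq_coef _ _ in hpos *.
set B := (Dp _)`_ _ in hD1 *.
set S := \sum_(i < _ | _) _. move=> hS. have hAB : 1 <= A * B by rewrite -(mulr1 1); apply: ler_pM. clearbody A B S. lia.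
Qed.
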